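(* Let $G$ be a graph, $R \subseteq V(G)$, $v_0\in V(G)$, and let $P$ be a shortest path from $v_0$ to $R$. Then for every milestone $v\in M_R(P)$, every vertex $u$ in the neutral prefix of $v$ in $P$, and every $y\in R$, it holds that $\mathrm{dist}(u,y)=|P[u,v]|+\mathrm{dist}(v,y)$.
   Context: $G$ is an unweighted undirected graph and $\mathrm{dist}$ is its shortest-path distance; $|Q|$ denotes the number of edges of a path $Q$ and $P[a,b]$ the subpath of $P$ between vertices $a,b$ of $P$. A shortest path from $v_0$ to $R$ is a path of length $\mathrm{dist}(v_0,R)=\min_{y\in R}\mathrm{dist}(v_0,y)$ from $v_0$ to a vertex of $R$; let $x$ be its unique vertex in $R$. Order $V(P)$ by $\le_P$: $v\le_P u$ iff $u\in V(P[v,x])$ (so the order goes from $v_0$ towards $x$). For $z\in V(G)$, the distance profile $\operatorname{prof}_{R,x}[z]\colon R\to\mathbb{Z}$ is $\operatorname{prof}_{R,x}[z](s)=\mathrm{dist}(z,s)-\mathrm{dist}(z,x)$. A vertex $v\in V(P)$ is a milestone of $P$ if $v=x$ or $\operatorname{prof}_{R,x}[v]\ne\operatorname{prof}_{R,x}[u]$ where $u$ is the successor of $v$ in $\le_P$; $M_R(P)$ is the set of milestones. For $v\in M_R(P)$, the neutral prefix of $v$ in $P$ is the vertex set of the maximal subpath $Q$ of $P[v_0,v]$ such that $v$ is the only milestone of $P$ belonging to $Q$. *)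

(* Defs.v *)
From mathcomp Require Import all_boot all_order all_algebra.
Set Implicit Arguments. Unset Strict Implicit. Unset Printing Implicit Defensive.
Import Order.TTheory GRing.Theory Num.Theory.

Section Graph.
Variables (T : finType) (e : rel T).

Definition walkb (n : nat) (a b : T) : bool :=
  [exists p : n.-tuple T, path e a p && (last a p == b)].

Lemma walk_ex (a b : T) : connect e a b -> exists n, walkb n a b.
Proof.
move=> /connectP [p pp lp]; exists (size p); apply/existsP.
exists (in_tuple p); by rewrite /= pp -lp eqxx.
Qed.

(* Shortest-path distance; None encodes +infinity (b unreachable from a). *)
Definition dist (a b : T) : option nat :=
  match boolP (connect e a b) with
  | AltTrue h => Some (ex_minn (walk_ex h))
  | AltFalse _ => None
  end.

Variables (R : {set T}) (v0 : T) (p : seq T).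
Definition Pv : seq T := v0 :: p.
Definition xend : T := last v0 p.

Definition seglen (a b : T) : nat :=
  maxn (index a Pv) (index b Pv) - minn (index a Pv) (index b Pv).

Definition succP (v : T) : T := nth v Pv (index v Pv).+1.

Definition prof (z s : T) : option int :=
  match dist z s, dist z xend with
  | Some a, Some b => Some (a%:Z - b%:Z)%R
  | _, _ => None
  end.

Definition milestone (v : T) : bool :=
  (v \in Pv) && ((v == xend) || [exists s in R, prof v s != prof (succP v) s]).

Definition in_neutral_prefix (v u : T) : Prop :=
  [/\ milestone v, u \in Pv, index u Pv <= index v Pv &
      forall w, w \in Pv -> index u Pv <= index w Pv < index v Pv ->
        ~~ milestone w].

Definition shortest_path_to_set : Prop :=
  [/\ path e v0 p, uniq Pv, xend \in R &
      forall y d, y \in R -> dist v0 y = Some d -> size p <= d].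

End Graph.

(* Main.v *)
Require Import Defs.
From mathcomp Require Import all_boot all_order all_algebra.
From mathcomp Require Import zify.

Section Aux.
Set Implicit Arguments. Unset Strict Implicit.
Variables (T : finType) (e : rel T).

Lemma walk_connect n a b : walkb e n a b -> connect e a b.
Proof.
move=> /existsP [t /andP [pt /eqP lt]]; apply/connectP; exists t => //.
Qed.

Lemma dist_someP a b d : dist e a b = Some d <->
  walkb e d a b /\ forall n, walkb e n a b -> d <= n.
Proof.
rewrite /dist; move: (@walk_ex T e a b); move=> f; destruct (boolP (connect e a b)) as [h|h].
  case: ex_minnP => m Hm Hmin; split.
    by case=> <-.
  by case=> Hd Hmin'; congr Some; apply/anti_leq; rewrite Hmin // Hmin'.
split => //; case=> Hd _; by case/negP: h; apply: walk_connect Hd.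
Qed.

Lemma dist_walk n a b : walkb e n a b -> exists d, dist e a b = Some d /\ d <= n.
Proof.
move=> W; rewrite /dist; move: (@walk_ex T e a b); move=> f; destruct (boolP (connect e a b)) as [h|h].
  case: ex_minnP => m Hm Hmin; exists m; split => //; exact: Hmin.
by case/negP: h; apply: walk_connect W.
Qed.

Lemma walk_seq n a b : walkb e n a b <->
  exists q, [/\ size q = n, path e a q & last a q = b].
Proof.
split.
  move=> /existsP [t /andP [pt /eqP lt]]; exists t; split => //; exact: size_tuple.
case=> q [Hs pq lq]; apply/existsP; exists (@Tuple n T q (introT eqP Hs)).
by rewrite /= pq lq eqxx.
Qed.

Lemma walk_cat m n a b c : walkb e m a b -> walkb e n b c -> walkb e (m + n) a c.
Proof.
move=> /walk_seq [q [s1 p1 l1]] /walk_seq [r [s2 p2 l2]]; apply/walk_seq.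
exists (q ++ r); split; first by rewrite size_cat s1 s2.
  by rewrite cat_path p1 l1.
by rewrite last_cat l1.
Qed.

Lemma last_take (v0 : T) p i : i <= size p -> last v0 (take i p) = nth v0 (v0 :: p) i.
Proof.
elim: p v0 i => [|x p IH] v0 [|i] //= Hi; by rewrite IH // (set_nth_default x) //= ltnS.
Qed.

End Aux.

Theorem lemma3p1 (T : finType) (e : rel T) (e_sym : symmetric e)
    (R : {set T}) (v0 : T) (p : seq T) :
  shortest_path_to_set e R v0 p ->
  forall v u y, milestone e R v0 p v -> in_neutral_prefix e R v0 p v u ->
  y \in R ->
  dist e u y = omap (fun d => seglen v0 p u v + d) (dist e v y).
Proof.
case=> pp up xR short v u y mv [_ uP iuv noms] yR.
pose w i := nth v0 (v0 :: p) i.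
have distx : forall i, i <= size p -> dist e (w i) (xend v0 p) = Some (size p - i).
  move=> i Hi; apply/dist_someP; split.
    apply/walk_seq; exists (drop i p); split; first by rewrite size_drop.
      by move: pp; rewrite -{1}(cat_take_drop i p) cat_path => /andP [_]; rewrite last_take.
    by rewrite /w -last_take // /xend -{3}(cat_take_drop i p) last_cat.
  move=> n Wn.
  have Wt : walkb e i v0 (w i).
    apply/walk_seq; exists (take i p); split; first by rewrite size_takel.
      exact: take_path.
    by rewrite last_take.
  have [d [Hd dle]] := dist_walk (walk_cat Wt Wn).
  have := short _ _ xR Hd; lia.
have widx : forall i, i <= size p -> index (w i) (Pv v0 p) = i.
  by move=> i Hi; apply: index_uniq.
have xw : xend v0 p = w (size p).
  by rewrite /w /xend -[size p]/((size (v0 :: p)).-1) nth_last.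
have step : forall k, k < size p -> ~~ milestone e R v0 p (w k) ->
    dist e (w k) y = omap S (dist e (w k.+1) y).
  move=> k Hk; rewrite /milestone mem_nth /=; last by rewrite ltnS ltnW.
  rewrite negb_or => /andP [_ /existsPn /(_ y)]; rewrite yR /= negbK => /eqP.
  rewrite /succP widx ?(ltnW Hk) // -/(w k).
  rewrite (set_nth_default v0); last by rewrite /= ltnS.
  change (nth v0 (v0 :: p) k.+1) with (w k.+1).
  rewrite /prof distx ?(ltnW Hk) // distx //.
  case: (dist e (w k) y) => [a|]; case: (dist e (w k.+1) y) => [b|] //.
  case=> H; congr Some; lia.
have vP : v \in Pv v0 p by case/andP: mv.
have jle : index v (Pv v0 p) <= size p.
  by rewrite -ltnS; have := index_mem v (Pv v0 p); rewrite vP.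
set i := index u (Pv v0 p) in iuv noms *.
set j := index v (Pv v0 p) in iuv noms jle *.
have uw : u = w i by rewrite /w /i nth_index.
have vw : v = w j by rewrite /w /j nth_index.
have claim : forall n k, j - k = n -> i <= k <= j ->
    dist e (w k) y = omap (addn (j - k)) (dist e (w j) y).
  elim=> [|n IH] k Hn /andP [ik kj].
    have -> : k = j by lia.
    by rewrite subnn; case: (dist e (w j) y).
  have kj' : k < j by lia.
  rewrite step; last first.
    apply: noms; first by apply: mem_nth; rewrite /= ltnS; lia.
    by rewrite widx; lia.
    lia.
  rewrite (IH k.+1); [|lia|lia].
  by case: (dist e (w j) y) => //= d; congr Some; lia.
rewrite uw {1}vw (claim (j - i) i) //; last by rewrite leqnn iuv.
rewrite /seglen -uw -vw -/i -/j.
by case: (dist e v y) => //= d; congr Some; lia.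
Qed.
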